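(* Consider the bidding-club model described in the context, and an agent $i$ who belongs to a bidding club of size $k\ge 2$. Compare two situations. - Situation (a): agents play the equilibrium in which all invited agents accept and truthfully report their valuations, and singletons bid $b^e(v,P^{n,1})$ after the announcement $n$. - Situation (b): agent $i$'s bidding club does not exist, and its $k$ agents (including $i$) participate directly in the main auction as singleton bidders. In this situation all agents follow the same strategies as in (a): singletons bid $b^e(v,P^{n',1})$, where $n'$ is the announced number of registered bidders, and members of other clubs accept and report truthfully. Then agent $i$'s expected utility in situation (a) is higher than in situation (b).
   Context: A single indivisible good is sold by a first-price auction with participation revelation. The auction proceeds as follows: (i) agents register; (ii) the auctioneer announces the number $n$ of registered bidders; (iii) registered bidders submit sealed bids; (iv) the highest bidder wins and pays his bid, and all others pay $0$. There is no participation fee. Agents are risk-neutral with independent private valuations drawn i.i.d. from a continuous, atomless cumulative distribution function $F$ on the nonnegative reals. A winner with valuation $v$ paying $t$ gets utility $v-t$; a non-winner paying $t$ gets utility $-t$. For an integer $m\ge2$ define $b^e(v,m)=v-F(v)^{-(m-1)}\int_0^vF(u)^{m-1}du$. For a distribution $P=(p_j)$ on the number of agents define $b^e(v,P)=\sum_{j\ge2}p_jb^e(v,j)$. Write $P_{x\ge i}=\sum_{x\ge i}p_x$. Write $P<P'$ iff there is $l$ with $P_{x\ge i}=P'_{x\ge i}$ for all $i<l$ and $P_{x\ge i}<P'_{x\ge i}$ for all $i\ge l$. Standing assumption: $P<P'$ implies $b^e(v,P)<b^e(v,P')$ for all $v$. Environment. The number $n_c$ of potential coordinators has distribution $\gamma_C$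 with $\gamma_C(0)=\gamma_C(1)=0$. Independently, each potential coordinator is associated with a random number of agents with common distribution $\gamma_A$ on $\{1,\dots,\kappa\}$, where $\kappa\ge2$, $\gamma_A(0)=0$ and $\gamma_A(1)<1$. - A potential coordinator with one agent yields a singleton bidder. - A potential coordinator with at least two agents is a bidding club whose agents are all invited. Each agent privately knows his valuation and his club size $s_i$ ($1$ for singletons). All of this is common knowledge. $P^{n,k}$ denotes the distribution of $k+X_1+\dots+X_{n-1}$, where the $X_j$ are i.i.d. with distribution $\gamma_A$. Coordinator protocol for a club of $k$ invited agents: - Each agent declines (and bids independently) or accepts and reports a binding valuation $\mu_i$. - If some agent declines, every accepting agent is registered. After the announcement $n$, the coordinator bids $b^e(\mu_i,P^{n,k})$ for each accepting agent $i$. - If all accept, only the highest reporter $h$ is registered, with bid $b^e(\mu_h,P^{n,1})$. If $h$ wins, he pays that bid to the auctioneer plus $b^e(\mu_h,P^{n,k})-b^e(\mu_h,P^{n,1})$ to the coordinator. *)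

(* Defs.v *)
From Stdlib Require Import Reals Arith.
From Coquelicot Require Import Coquelicot.
Open Scope R_scope.

(** Distribution of the sum of [j] i.i.d. random variables with law [g]
    on nat ([g a] = probability of value [a]): [sumdist g j m] = Pr(X_1+...+X_j = m). *)
Fixpoint sumdist (g : nat -> R) (j : nat) (m : nat) : R :=
  match j with
  | O => if Nat.eqb m 0 then 1 else 0
  | S j' => sum_n (fun a => g a * sumdist g j' (m - a)%nat) m
  end.

(** [Pnk gA n k] = P^{n,k}: the law of k + X_1 + ... + X_{n-1}, X_j i.i.d. ~ gA. *)
Definition Pnk (gA : nat -> R) (n k : nat) (m : nat) : R :=
  if (k <=? m)%nat then sumdist gA (n - 1) (m - k) else 0.

Definition be (F : R -> R) (v : R) (m : nat) : R :=
  v - / (F v ^ (m - 1)) * RInt (fun u => F u ^ (m - 1)) 0 v.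

Definition beP (F : R -> R) (v : R) (P : nat -> R) : R :=
  Series (fun j => if (2 <=? j)%nat then P j * be F v j else 0).

Definition tail (P : nat -> R) (i : nat) : R :=
  Series (fun x => if (i <=? x)%nat then P x else 0).

Definition ltP (P P' : nat -> R) : Prop :=
  exists l : nat,
    (forall i, (i < l)%nat -> tail P i = tail P' i) /\
    (forall i, (l <= i)%nat -> tail P i < tail P' i).

Definition is_dist (P : nat -> R) : Prop :=
  (forall j, 0 <= P j) /\ is_series P 1.

(** Probability that an agent with valuation v has the highest valuation
    among N agents with i.i.d. valuations ~ F (F atomless, so ties have
    probability 0).  In both situations all bidders use the same
    nondecreasing bid function, so this is the winning probability. *)
Definition winprob (F : R -> R) (v : R) (N : nat) : R := F v ^ (N - 1).

(** Situation (a): interim expected utility (given valuation v) of agent i in a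
    club of size k.  n = n_c ~ gC coordinators (i's club is one of them); the
    other n-1 coordinators have i.i.d. sizes ~ gA (total size S of them);
    all n coordinators register one bidder, so the announcement is n; agent i
    wins iff his valuation is the highest among the k+S agents, and then pays
    b^e(v,P^{n,1}) to the auctioneer plus b^e(v,P^{n,k})-b^e(v,P^{n,1}) to the
    coordinator. *)
Definition util_a (F : R -> R) (gC gA : nat -> R) (k : nat) (v : R) : R :=
  Series (fun n => gC n *
    Series (fun S => sumdist gA (n - 1) S * winprob F v (k + S) *
                     (v - beP F v (Pnk gA n k)))).

(** Situation (b): agent i's club is dissolved, its k agents register as
    singletons; the announcement is n' = (n-1) + k, and agent i bids
    b^e(v,P^{n',1}), paying it if he wins. *)
Definition util_b (F : R -> R) (gC gA : nat -> R) (k : nat) (v : R) : R :=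
  Series (fun n => gC n *
    Series (fun S => sumdist gA (n - 1) S * winprob F v (k + S) *
                     (v - beP F v (Pnk gA (n - 1 + k) 1)))).

(* Main.v *)
Require Import Defs.
From Stdlib Require Import Reals Arith.
From Coquelicot Require Import Coquelicot.
From Stdlib Require Import Lia Lra Classical.
Open Scope R_scope.

Lemma sumSr (a : nat -> R) n : sum_n a (S n) = sum_n a n + a (S n).
Proof. rewrite sum_Sn. reflexivity. Qed.

Lemma sum_zero_ext (a : nat -> R) N : (forall m, (m <= N)%nat -> a m = 0) -> sum_n a N = 0.
Proof.
  intros H. induction N. rewrite sum_O. apply H; lia.
  rewrite sumSr, IHN, H; [lra|lia|]. intros; apply H; lia.
Qed.

Lemma sum_trunc (a : nat -> R) M N : (forall m, (M < m)%nat -> a m = 0) -> (M <= N)%nat ->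
  sum_n a N = sum_n a M.
Proof.
  intros H HMN. induction HMN. reflexivity.
  rewrite sumSr, IHHMN, H; [lra|lia].
Qed.

Lemma sum_le (a b : nat -> R) N : (forall m, (m <= N)%nat -> a m <= b m) -> sum_n a N <= sum_n b N.
Proof.
  intros H. induction N. rewrite !sum_O; apply H; lia.
  rewrite !sumSr. apply Rplus_le_compat. apply IHN; intros; apply H; lia. apply H; lia.
Qed.

Lemma sum_ge_term (a : nat -> R) N m0 : (forall m, (m <= N)%nat -> 0 <= a m) -> (m0 <= N)%nat ->
  a m0 <= sum_n a N.
Proof.
  intros H Hm. induction N.
  - replace m0 with 0%nat by lia. rewrite sum_O; lra.
  - rewrite sumSr. destruct (Nat.eq_dec m0 (S N)).
    + subst. assert (0 <= sum_n a N). { rewrite <- (sum_zero_ext (fun _ => 0) N) by auto.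
        apply sum_le. intros; apply H; lia. } lra.
    + assert (a m0 <= sum_n a N) by (apply IHN; [intros; apply H; lia| lia]).
      assert (0 <= a (S N)) by (apply H; lia). lra.
Qed.

Lemma sum_ext (a b : nat -> R) N : (forall m, (m <= N)%nat -> a m = b m) -> sum_n a N = sum_n b N.
Proof. apply sum_n_ext_loc. Qed.

Lemma sum_minus (a b : nat -> R) N : sum_n (fun m => a m - b m) N = sum_n a N - sum_n b N.
Proof.
  induction N. rewrite !sum_O; lra. rewrite !sumSr, IHN; lra.
Qed.

Lemma sum_mulr (a : nat -> R) c N : sum_n (fun m => a m * c) N = sum_n a N * c.
Proof.
  induction N. rewrite !sum_O; lra. rewrite !sumSr, IHN; lra.
Qed.

Lemma sum_mull (a : nat -> R) c N : sum_n (fun m => c * a m) N = c * sum_n a N.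
Proof.
  induction N. rewrite !sum_O; lra. rewrite !sumSr, IHN; lra.
Qed.

Lemma sum_first (a : nat -> R) N : sum_n a (S N) = a 0%nat + sum_n (fun m => a (S m)) N.
Proof.
  induction N. rewrite sumSr, !sum_O; lra. rewrite sumSr, IHN, sumSr; lra.
Qed.

Lemma sum_shift (u : nat -> R) k M :
  sum_n (fun m => if (k <=? m)%nat then u (m - k)%nat else 0) (k + M) = sum_n u M.
Proof.
  revert u. induction k; intros u.
  - simpl. apply sum_ext. intros m _. rewrite Nat.sub_0_r. reflexivity.
  - simpl (S k + M)%nat. rewrite sum_first. simpl. rewrite Rplus_0_l. apply IHk.
Qed.

Lemma tri_swap (u : nat -> nat -> R) N :
  sum_n (fun m => sum_n (fun a => u a (m - a)%nat) m) N =
  sum_n (fun a => sum_n (fun b => u a b) (N - a)%nat) N.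
Proof.
  induction N.
  - rewrite !sum_O. reflexivity.
  - rewrite (sumSr _ N), IHN. rewrite (sumSr _ N).
    rewrite (sumSr (fun a => sum_n (fun b => u a b) (S N - a)) N).
    rewrite !Nat.sub_diag, sum_O.
    rewrite (sum_ext (fun a => sum_n (fun b => u a b) (S N - a)) 
       (fun a => sum_n (fun b => u a b) (N - a) + u a (S N - a)%nat)).
    2:{ intros m Hm. replace (S N - m)%nat with (S (N - m)) by lia. rewrite sumSr. reflexivity. }
    rewrite (sum_n_plus (G:=R_AbelianMonoid)). simpl. unfold plus; simpl. lra.
Qed.

Lemma is_series_fin (a : nat -> R) N : (forall m, (N < m)%nat -> a m = 0) -> is_series a (sum_n a N).
Proof.
  intros H. unfold is_series. apply (filterlim_ext_loc (fun _ => sum_n a N)).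
  exists N. intros n Hn. symmetry. apply sum_trunc; auto.
  apply filterlim_const.
Qed.

Lemma Series_fin (a : nat -> R) N : (forall m, (N < m)%nat -> a m = 0) -> Series a = sum_n a N.
Proof. intros H; apply is_series_unique, is_series_fin, H. Qed.

Lemma sd_supp (g : nat -> R) kap : (forall a, (kap < a)%nat -> g a = 0) ->
  forall j m, (j * kap < m)%nat -> sumdist g j m = 0.
Proof.
  intros Hg j. induction j; intros m Hm.
  - simpl. destruct m; [lia|reflexivity].
  - simpl. apply sum_zero_ext. intros a Ha.
    destruct (le_lt_dec a kap).
    + rewrite IHj by (simpl in Hm; lia). lra.
    + rewrite Hg by lia. lra.
Qed.

Definition E (g : nat -> R) kap j (h : nat -> R) :=
  sum_n (fun m => sumdist g j m * h m) (j * kap).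

Lemma E_stable g kap j h N : (forall a, (kap < a)%nat -> g a = 0) -> (j * kap <= N)%nat ->
  sum_n (fun m => sumdist g j m * h m) N = E g kap j h.
Proof.
  intros Hg HN. unfold E. apply sum_trunc; auto.
  intros m Hm. rewrite sd_supp with (kap := kap); auto. lra.
Qed.

Lemma E_ext g kap j h1 h2 : (forall y, h1 y = h2 y) -> E g kap j h1 = E g kap j h2.
Proof. intros H. unfold E. apply sum_ext. intros; rewrite H; auto. Qed.

Lemma E_0 g kap h : E g kap 0 h = h 0%nat.
Proof. unfold E. simpl. rewrite sum_O. simpl. lra. Qed.

Lemma E_succ g kap j h : (forall a, (kap < a)%nat -> g a = 0) ->
  E g kap (S j) h = sum_n (fun a => g a * E g kap j (fun b => h (a + b)%nat)) kap.
Proof.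
  intros Hg. unfold E at 1.
  set (N := (S j * kap)%nat).
  rewrite (sum_ext _ (fun m => sum_n (fun a => (fun a b => g a * sumdist g j b * h (a + b)%nat) a (m - a)%nat) m)).
  2:{ intros m _. simpl sumdist. rewrite <- sum_mulr. apply sum_ext. intros a Ha.
      replace (a + (m - a))%nat with m by lia. reflexivity. }
  rewrite (tri_swap (fun a b => g a * sumdist g j b * h (a + b)%nat)).
  rewrite (sum_ext _ (fun a => g a * E g kap j (fun b => h (a + b)%nat))).
  2:{ intros a Ha. destruct (le_lt_dec a kap).
      - rewrite <- (E_stable g kap j _ (N - a)); auto.
        + rewrite <- sum_mull. apply sum_ext. intros; lra.
        + unfold N; simpl; lia.
      - rewrite Hg by lia. rewrite (sum_ext _ (fun _ => 0)). rewrite sum_zero_ext; auto. lra.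
        intros; lra. }
  apply sum_trunc. intros m Hm. rewrite Hg; auto; lra. unfold N; simpl; lia.
Qed.

Lemma E_mono g kap j h1 h2 : (forall a, (kap < a)%nat -> g a = 0) -> (forall a, 0 <= g a) ->
  (forall y, h1 y <= h2 y) -> E g kap j h1 <= E g kap j h2.
Proof.
  intros Hg Hn. revert h1 h2. induction j; intros h1 h2 H.
  - rewrite !E_0; auto.
  - rewrite !E_succ; auto. apply sum_le. intros a _. apply Rmult_le_compat_l; auto.
Qed.

Lemma E_pos g kap j h k : (forall a, (kap < a)%nat -> g a = 0) -> (forall a, 0 <= g a) ->
  0 < g k -> (forall y, 0 < h y) -> 0 < E g kap j h.
Proof.
  intros Hg Hn Hk. assert (Hkk : (k <= kap)%nat).
  { destruct (le_lt_dec k kap); auto. rewrite Hg in Hk; [lra|lia]. }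
  revert h. induction j; intros h H.
  - rewrite !E_0; auto.
  - rewrite !E_succ; auto.
    eapply Rlt_le_trans; [|apply (sum_ge_term _ _ k)]; auto.
    apply Rmult_lt_0_compat; auto.
    intros m _. apply Rmult_le_pos; auto. left; auto.
Qed.

Lemma E_const g kap j c : (forall a, (kap < a)%nat -> g a = 0) -> sum_n g kap = 1 ->
  E g kap j (fun _ => c) = c.
Proof.
  intros Hg Hs. induction j.
  - rewrite E_0; auto.
  - rewrite E_succ; auto. rewrite (sum_ext _ (fun a => g a * c)).
    rewrite sum_mulr, Hs; lra. intros; rewrite IHj; auto.
Qed.

Lemma E_minus g kap j h1 h2 : E g kap j (fun y => h1 y - h2 y) = E g kap j h1 - E g kap j h2.
Proof.
  unfold E. rewrite <- sum_minus. apply sum_ext; intros; ring.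
Qed.

Lemma avg g kap X : sum_n g kap = 1 -> sum_n (fun a => g a * X) kap = X.
Proof. intros H. rewrite sum_mulr, H. lra. Qed.

Lemma Lweak g kap f : (forall a, (kap < a)%nat -> g a = 0) -> (forall a, 0 <= g a) ->
  g 0%nat = 0 -> sum_n g kap = 1 ->
  (forall m m', (m <= m')%nat -> f m <= f m') ->
  forall t j c, E g kap j (fun y => f (c + t + y)%nat) <= E g kap (t + j) (fun y => f (c + y)%nat).
Proof.
  intros Hg Hn H0 Hs Hf. induction t; intros j c.
  - simpl. right. apply E_ext. intros; f_equal; lia.
  - simpl (S t + j)%nat. rewrite E_succ; auto.
    rewrite <- (avg g kap (E g kap j (fun y => f (c + S t + y)%nat))) by auto.
    apply sum_le. intros a _. destruct a.
    + rewrite H0. lra.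
    + apply Rmult_le_compat_l; auto.
      eapply Rle_trans; [|eapply Rle_trans; [apply (IHt j (c + S a)%nat)|]].
      * apply E_mono; auto. intros y. apply Hf. lia.
      * right. apply E_ext. intros; f_equal; lia.
Qed.

Lemma Lstrict g kap f k : (forall a, (kap < a)%nat -> g a = 0) -> (forall a, 0 <= g a) ->
  g 0%nat = 0 -> sum_n g kap = 1 -> (2 <= k)%nat -> 0 < g k ->
  (forall m m', (m <= m')%nat -> f m <= f m') ->
  (forall m m', (2 <= m)%nat -> (m < m')%nat -> f m < f m') ->
  forall t j c, (1 <= c)%nat ->
  E g kap j (fun y => f (c + S t + y)%nat) < E g kap (S t + j) (fun y => f (c + y)%nat).
Proof.
  intros Hg Hn H0 Hs Hk Hgk Hf Hfs t j c Hc.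
  assert (Hkk : (k <= kap)%nat).
  { destruct (le_lt_dec k kap); auto. rewrite Hg in Hgk; [lra|lia]. }
  simpl (S t + j)%nat. rewrite E_succ; auto.
  set (X := E g kap j (fun y => f (c + S t + y)%nat)).
  set (Y := fun a => E g kap j (fun y => f (c + a + t + y)%nat)).
  apply Rlt_le_trans with (sum_n (fun a => g a * Y a) kap).
  - rewrite <- (avg g kap X) by auto. apply Rminus_gt_0_lt. rewrite <- sum_minus.
    eapply Rlt_le_trans; [|apply (sum_ge_term _ _ k)]; auto.
    + cbv beta. rewrite <- Rmult_minus_distr_l. apply Rmult_lt_0_compat; auto.
      unfold Y, X. rewrite <- E_minus. apply (E_pos g kap j _ k); auto.
      intros y. apply Rlt_Rminus. apply Hfs; lia.
    + intros a _. cbv beta. rewrite <- Rmult_minus_distr_l. destruct a.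
      * rewrite H0; lra.
      * apply Rmult_le_pos; auto. unfold Y, X. rewrite <- E_minus.
        rewrite <- (E_const g kap j 0) by auto. apply E_mono; auto.
        intros y. apply Rge_le, Rge_minus, Rle_ge, Hf. lia.
  - apply sum_le. intros a _. apply Rmult_le_compat_l; auto. unfold Y.
    eapply Rle_trans; [apply (Lweak g kap f Hg Hn H0 Hs Hf t j (c + a)%nat)|].
    right. apply E_ext. intros; f_equal; lia.
Qed.

Lemma F_nonneg (F : R -> R) : (forall x y, x <= y -> F x <= F y) -> (forall x, x <= 0 -> F x = 0) ->
  forall x, 0 <= F x.
Proof.
  intros Hm H0 x. destruct (Rle_lt_dec x 0).
  - rewrite H0; auto; lra.
  - rewrite <- (H0 0) by lra. apply Hm; lra.
Qed.

Lemma le1 (F : R -> R) v : (forall x y, x <= y -> F x <= F y) -> is_lim F p_infty (Finite 1) -> F v <= 1.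
Proof.
  intros Hm Hl. destruct (Rle_lt_dec (F v) 1) as [h|h]; auto. exfalso.
  assert (Hloc : locally 1 (fun y => y < F v)).
  { assert (e : 0 < F v - 1) by lra. exists (mkposreal _ e). intros y Hy.
    unfold ball in Hy; simpl in Hy; unfold AbsRing_ball, abs, minus, plus, opp in Hy; simpl in Hy.
    apply Rabs_lt_between in Hy. lra. }
  specialize (Hl _ Hloc). destruct Hl as [M HM].
  assert (HF := HM (Rmax M v + 1) ltac:(pose proof (Rmax_l M v); lra)).
  assert (F v <= F (Rmax M v + 1)) by (apply Hm; pose proof (Rmax_r M v); lra). simpl in HF. lra.
Qed.

Lemma Fcont (F : R -> R) : (forall x, continuity_pt F x) -> forall q z, continuous (fun u => F u ^ q) z.
Proof.
  intros Hc q z. induction q.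
  - simpl. apply continuous_const.
  - apply (continuous_ext (fun u => mult (F u) (F u ^ q))). intros; reflexivity.
    apply (continuous_mult (K:=R_AbsRing)); auto. apply continuity_pt_filterlim, Hc.
Qed.

Lemma Fint (F : R -> R) : (forall x, continuity_pt F x) -> forall q a b, ex_RInt (fun u => F u ^ q) a b.
Proof. intros Hc q a b. apply (ex_RInt_continuous (V:=R_CompleteNormedModule)). intros; apply Fcont; auto. Qed.

Lemma Gcont (F : R -> R) p q : (forall x, continuity_pt F x) -> forall z,
  continuous (fun u => p * F u ^ q - F u ^ S q) z.
Proof.
  intros Hc z.
  apply (continuous_ext (fun u => minus (scal p (F u ^ q)) (F u ^ S q))). intros; reflexivity.
  apply (continuous_minus (K:=R_AbsRing) (V:=R_NormedModule)). apply (continuous_scal_r (K:=R_AbsRing) (V:=R_NormedModule)). apply Fcont; auto. apply Fcont; auto.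
Qed.

Lemma Gint (F : R -> R) p q : (forall x, continuity_pt F x) -> forall a b, ex_RInt (fun u => p * F u ^ q - F u ^ S q) a b.
Proof. intros Hc a b. apply (ex_RInt_continuous (V:=R_CompleteNormedModule)). intros; apply Gcont; auto. Qed.

Lemma RInt_c a b c : RInt (fun _ => c) a b = (b - a) * c.
Proof. rewrite RInt_const. reflexivity. Qed.

Lemma I_bounds (F : R -> R) v q : (forall x, continuity_pt F x) -> (forall x y, x <= y -> F x <= F y) ->
  (forall x, x <= 0 -> F x = 0) -> 0 <= v ->
  0 <= RInt (fun u => F u ^ q) 0 v <= v * F v ^ q.
Proof.
  intros Hc Hm H0 Hv. pose proof (F_nonneg F Hm H0) as Fn. split.
  - apply Rle_trans with (RInt (fun _ => 0) 0 v). rewrite RInt_c; lra. apply RInt_le; auto.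
    apply ex_RInt_const. apply Fint; auto. intros; apply pow_le; auto.
  - apply Rle_trans with (RInt (fun _ => F v ^ q) 0 v). 2:{ rewrite RInt_c; lra. } apply RInt_le; auto.
    apply Fint; auto. apply ex_RInt_const. intros; apply pow_incr. split; auto. apply Hm; lra.
Qed.

Lemma v_pos (F : R -> R) v : (forall x, x <= 0 -> F x = 0) -> 0 < F v -> 0 < v.
Proof. intros H0 Hv. destruct (Rle_lt_dec v 0); auto. rewrite H0 in Hv; lra. Qed.

Lemma be_bounds (F : R -> R) v m : (forall x, continuity_pt F x) -> (forall x y, x <= y -> F x <= F y) ->
  (forall x, x <= 0 -> F x = 0) -> 0 < F v -> 0 <= be F v m <= v.
Proof.
  intros Hc Hm H0 Hv. pose proof (v_pos F v H0 Hv).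
  destruct (I_bounds F v (m - 1) Hc Hm H0 ltac:(lra)).
  assert (0 < F v ^ (m - 1)) by (apply pow_lt; auto).
  unfold be. assert (0 < / F v ^ (m - 1)) by (apply Rinv_0_lt_compat; auto).
  assert (/ F v ^ (m - 1) * RInt (fun u => F u ^ (m - 1)) 0 v <= v).
  { apply Rle_trans with (/ F v ^ (m - 1) * (v * F v ^ (m - 1))).
    apply Rmult_le_compat_l; lra. right; field; lra. }
  assert (0 <= / F v ^ (m - 1) * RInt (fun u => F u ^ (m - 1)) 0 v) by (apply Rmult_le_pos; lra).
  lra.
Qed.

Lemma key_int (F : R -> R) v q : (forall x, continuity_pt F x) -> (forall x y, x <= y -> F x <= F y) ->
  (forall x, x <= 0 -> F x = 0) -> 0 < F v ->
  0 < RInt (fun u => F v * F u ^ q - F u ^ S q) 0 v.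
Proof.
  intros Hc Hm H0 Hv. pose proof (v_pos F v H0 Hv) as vp. pose proof (F_nonneg F Hm H0) as Fn.
  set (p := F v) in *.
  assert (ivt : forall c, 0 < c < p -> {u | 0 <= u <= v /\ F u = c}).
  { intros c Hcp. destruct (IVT (fun x => F x - c) 0 v) as [u [Hu1 Hu2]]; auto.
    - intros x. apply continuity_pt_minus. apply Hc. apply continuity_pt_const. intros a b; reflexivity.
    - rewrite H0; lra.
    - unfold p in Hcp; lra.
    - exists u. split; auto. lra. }
  destruct (ivt (p/3)) as [u1 [Hu1 Fu1]]. lra.
  destruct (ivt (2*p/3)) as [u2 [Hu2 Fu2]]. lra.
  assert (u12 : u1 < u2).
  { destruct (Rlt_le_dec u1 u2); auto. assert (F u2 <= F u1) by (apply Hm; auto). lra. }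
  set (G := fun u => p * F u ^ q - F u ^ S q).
  assert (Gnn : forall x, 0 <= x <= v -> 0 <= G x).
  { intros x Hx. unfold G. simpl. replace (p * F x ^ q - F x * F x ^ q) with (F x ^ q * (p - F x)) by ring.
    apply Rmult_le_pos. apply pow_le; auto. assert (F x <= p) by (apply Hm; lra). lra. }
  assert (Gpos : forall x, u1 <= x <= u2 -> (p/3) ^ S q <= G x).
  { intros x Hx. unfold G. simpl. replace (p * F x ^ q - F x * F x ^ q) with (F x ^ q * (p - F x)) by ring.
    assert (p/3 <= F x) by (rewrite <- Fu1; apply Hm; lra).
    assert (F x <= 2*p/3) by (rewrite <- Fu2; apply Hm; lra).
    rewrite (Rmult_comm (p/3)). apply Rmult_le_compat; try lra. apply pow_le; lra. apply pow_incr; lra. }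
  assert (ex : forall a b, ex_RInt G a b) by (intros; apply Gint; auto).
  fold G. rewrite <- (RInt_Chasles G 0 u1 v), <- (RInt_Chasles G u1 u2 v); auto.
  unfold plus; simpl.
  assert (0 <= RInt G 0 u1).
  { apply Rle_trans with (RInt (fun _ => 0) 0 u1). rewrite RInt_c; lra. apply RInt_le; try lra; auto.
    apply ex_RInt_const. intros; apply Gnn; lra. }
  assert (0 <= RInt G u2 v).
  { apply Rle_trans with (RInt (fun _ => 0) u2 v). rewrite RInt_c; lra. apply RInt_le; try lra; auto.
    apply ex_RInt_const. intros; apply Gnn; lra. }
  assert (0 < RInt G u1 u2).
  { apply Rlt_le_trans with (RInt (fun _ => (p/3) ^ S q) u1 u2). rewrite RInt_c.
    apply Rmult_lt_0_compat. lra. apply pow_lt; lra. apply RInt_le; try lra; auto.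
    apply ex_RInt_const. intros; apply Gpos; lra. }
  lra.
Qed.

Lemma alg (p P I0 I1 : R) : 0 < p -> 0 < P -> 0 < p * I0 - I1 -> / (p * P) * I1 < / P * I0.
Proof.
  intros. apply Rmult_lt_reg_l with (p * P). apply Rmult_lt_0_compat; lra.
  replace (p * P * (/ (p * P) * I1)) with I1 by (field; lra).
  replace (p * P * (/ P * I0)) with (p * I0) by (field; lra). lra.
Qed.

Lemma be_strict (F : R -> R) v q : (forall x, continuity_pt F x) -> (forall x y, x <= y -> F x <= F y) ->
  (forall x, x <= 0 -> F x = 0) -> 0 < F v ->
  be F v (S q) < be F v (S (S q)).
Proof.
  intros Hc Hm H0 Hv. pose proof (key_int F v q Hc Hm H0 Hv) as K.
  unfold be. replace (S q - 1)%nat with q by lia. replace (S (S q) - 1)%nat with (S q) by lia.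
  set (p := F v) in *.
  assert (E1 : RInt (fun u => p * F u ^ q - F u ^ S q) 0 v =
     p * RInt (fun u => F u ^ q) 0 v - RInt (fun u => F u ^ S q) 0 v).
  { rewrite (RInt_minus (V:=R_CompleteNormedModule) (fun u => p * F u ^ q) (fun u => F u ^ S q)).
    rewrite (RInt_scal (V:=R_CompleteNormedModule) (fun u => F u ^ q)). reflexivity.
    apply Fint; auto. apply (ex_RInt_scal (V:=R_NormedModule)). apply Fint; auto. apply Fint; auto. }
  rewrite E1 in K.
  assert (0 < p ^ q) by (apply pow_lt; auto).
  set (I0 := RInt (fun u => F u ^ q) 0 v) in *. set (I1 := RInt (fun u => F u ^ S q) 0 v) in *.
  assert (/ p ^ (S q) * I1 < / p ^ q * I0).
  { simpl. apply alg; auto. }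
  lra.
Qed.

Definition fb (F : R -> R) v (m : nat) : R := if (2 <=? m)%nat then be F v m else 0.

Lemma fb_step (F : R -> R) v m : (forall x, continuity_pt F x) -> (forall x y, x <= y -> F x <= F y) ->
  (forall x, x <= 0 -> F x = 0) -> 0 < F v ->
  fb F v m <= fb F v (S m) /\ ((2 <= m)%nat -> fb F v m < fb F v (S m)).
Proof.
  intros Hc Hm H0 Hv. unfold fb. destruct (2 <=? m)%nat eqn:E.
  - apply Nat.leb_le in E. replace (2 <=? S m)%nat with true by (symmetry; apply Nat.leb_le; lia).
    destruct m as [|m]; [lia|]. pose proof (be_strict F v m Hc Hm H0 Hv). split; auto; lra.
  - split; [|intros; apply Nat.leb_nle in E; lia].
    destruct (2 <=? S m)%nat; [|lra]. apply be_bounds; auto.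
Qed.

Lemma fb_mono (F : R -> R) v : (forall x, continuity_pt F x) -> (forall x y, x <= y -> F x <= F y) ->
  (forall x, x <= 0 -> F x = 0) -> 0 < F v ->
  forall m m', (m <= m')%nat -> fb F v m <= fb F v m'.
Proof.
  intros Hc Hm H0 Hv m m' H. induction H. lra.
  eapply Rle_trans; [apply IHle|]. apply fb_step; auto.
Qed.

Lemma fb_strict (F : R -> R) v : (forall x, continuity_pt F x) -> (forall x y, x <= y -> F x <= F y) ->
  (forall x, x <= 0 -> F x = 0) -> 0 < F v ->
  forall m m', (2 <= m)%nat -> (m < m')%nat -> fb F v m < fb F v m'.
Proof.
  intros Hc Hm H0 Hv m m' H2 H. induction H.
  - apply fb_step; auto.
  - eapply Rlt_le_trans; [apply IHle|]. apply fb_step; auto.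
Qed.

Lemma fb_bounds (F : R -> R) v m : (forall x, continuity_pt F x) -> (forall x y, x <= y -> F x <= F y) ->
  (forall x, x <= 0 -> F x = 0) -> 0 < F v -> 0 <= fb F v m <= v.
Proof.
  intros Hc Hm H0 Hv. pose proof (v_pos F v H0 Hv). unfold fb. destruct (2 <=? m)%nat. apply be_bounds; auto. lra.
Qed.

Lemma beP_E (F : R -> R) v gA kappa n k' : (forall a, (kappa < a)%nat -> gA a = 0) ->
  beP F v (Pnk gA n k') = E gA kappa (n - 1) (fun y => fb F v (k' + y)%nat).
Proof.
  intros Hg. unfold beP.
  rewrite (Series_ext _ (fun m => if (k' <=? m)%nat then (fun y => sumdist gA (n-1) y * fb F v (k' + y)%nat) (m - k')%nat else 0)).
  2:{ intros m. unfold Pnk, fb. destruct (k' <=? m)%nat eqn:E1.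
      - apply Nat.leb_le in E1. replace (k' + (m - k'))%nat with m by lia.
        destruct (2 <=? m)%nat; ring.
      - destruct (2 <=? m)%nat; ring. }
  rewrite (Series_fin _ (k' + (n - 1) * kappa)).
  - rewrite (sum_shift (fun y => sumdist gA (n-1) y * fb F v (k' + y)%nat)). reflexivity.
  - intros m Hm. destruct (k' <=? m)%nat eqn:E1; auto.
    apply Nat.leb_le in E1. rewrite (sd_supp gA kappa Hg (n - 1)); [ring|lia].
Qed.

Lemma inner_E (F : R -> R) v gA kappa n k c : (forall a, (kappa < a)%nat -> gA a = 0) ->
  Series (fun S => sumdist gA (n - 1) S * winprob F v (k + S) * (v - c)) =
  E gA kappa (n - 1) (fun y => winprob F v (k + y) * (v - c)).
Proof.
  intros Hg. rewrite (Series_fin _ ((n - 1) * kappa)).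
  - unfold E. apply sum_ext; intros; ring.
  - intros m Hm. rewrite (sd_supp gA kappa Hg (n - 1)); [ring|lia].
Qed.

Theorem theorem2 (F : R -> R) (gC gA : nat -> R) (kappa k : nat) (v : R)
  (* F: continuous (atomless) CDF on the nonnegative reals *)
  (HFcont : forall x, continuity_pt F x)
  (HFmono : forall x y, x <= y -> F x <= F y)
  (HF0 : forall x, x <= 0 -> F x = 0)
  (HFlim : is_lim F p_infty (Finite 1))
  (* gamma_C: distribution of the number of potential coordinators *)
  (HgC_nonneg : forall n, 0 <= gC n)
  (HgC_sum : is_series gC 1)
  (HgC0 : gC 0%nat = 0) (HgC1 : gC 1%nat = 0)
  (* gamma_A: distribution on {1,...,kappa} *)
  (Hkappa : (2 <= kappa)%nat)
  (HgA_nonneg : forall j, 0 <= gA j)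
  (HgA_supp : forall j, (j = 0 \/ kappa < j)%nat -> gA j = 0)
  (HgA_sum : sum_n gA kappa = 1)
  (HgA1 : gA 1%nat < 1)
  (* standing assumption *)
  (Hstanding : forall P P' : nat -> R, is_dist P -> is_dist P' -> ltP P P' ->
                 forall w, 0 < F w -> beP F w P < beP F w P')
  (* agent i is in a bidding club of size k >= 2, with valuation v *)
  (Hk : (2 <= k)%nat) (HgAk : 0 < gA k)
  (Hv : 0 < F v) :
  util_b F gC gA k v < util_a F gC gA k v.
Proof.
  assert (Hg : forall a, (kappa < a)%nat -> gA a = 0) by (intros; apply HgA_supp; auto).
  assert (H0 : gA 0%nat = 0) by (apply HgA_supp; auto).
  pose proof (v_pos F v HF0 Hv) as vp.
  pose proof (le1 F v HFmono HFlim) as Fv1.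
  set (f := fb F v).
  assert (fm := fb_mono F v HFcont HFmono HF0 Hv).
  assert (fs := fb_strict F v HFcont HFmono HF0 Hv).
  assert (fbd := fun m => fb_bounds F v m HFcont HFmono HF0 Hv).
  set (cA := fun n => E gA kappa (n - 1) (fun y => f (k + y)%nat)).
  set (cB := fun n => E gA kappa (n - 1 + k - 1) (fun y => f (1 + y)%nat)).
  set (w := fun y : nat => winprob F v (k + y)).
  assert (wb : forall y, 0 < w y <= 1).
  { intros y. unfold w, winprob. split. apply pow_lt; auto.
    rewrite <- (pow1 (k + y - 1)). apply pow_incr. lra. }
  set (A := fun n => E gA kappa (n - 1) (fun y => w y * (v - cA n))).
  set (B := fun n => E gA kappa (n - 1) (fun y => w y * (v - cB n))).
  assert (Ea : util_a F gC gA k v = Series (fun n => gC n * A n)).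
  { unfold util_a. apply Series_ext. intros n. f_equal. rewrite beP_E with (kappa := kappa) by auto.
    rewrite inner_E with (kappa := kappa) by auto. reflexivity. }
  assert (Eb : util_b F gC gA k v = Series (fun n => gC n * B n)).
  { unfold util_b. apply Series_ext. intros n. f_equal. rewrite beP_E with (kappa := kappa) by auto.
    rewrite inner_E with (kappa := kappa) by auto. reflexivity. }
  assert (Ebd : forall j h, (forall y, 0 <= h y <= v) -> 0 <= E gA kappa j h <= v).
  { intros j h Hh. split.
    - rewrite <- (E_const gA kappa j 0) by auto. apply E_mono; auto. intros; apply Hh.
    - rewrite <- (E_const gA kappa j v) by auto. apply E_mono; auto. intros; apply Hh. }
  assert (cAb : forall n, 0 <= cA n <= v) by (intros; apply Ebd; intros; apply fbd).
  assert (cBb : forall n, 0 <= cB n <= v) by (intros; apply Ebd; intros; apply fbd).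
  assert (Ab : forall n, 0 <= A n <= v).
  { intros n; apply Ebd; intros y. specialize (wb y). specialize (cAb n). split.
    apply Rmult_le_pos; lra. rewrite <- (Rmult_1_l v) at 2. apply Rmult_le_compat; lra. }
  assert (Bb : forall n, 0 <= B n <= v).
  { intros n; apply Ebd; intros y. specialize (wb y). specialize (cBb n). split.
    apply Rmult_le_pos; lra. rewrite <- (Rmult_1_l v) at 2. apply Rmult_le_compat; lra. }
  assert (cAB : forall n, (1 <= n)%nat -> cA n < cB n).
  { intros n Hn. unfold cA, cB.
    pose proof (Lstrict gA kappa f k Hg HgA_nonneg H0 HgA_sum Hk HgAk fm fs (k - 2) (n - 1) 1 ltac:(lia)) as L.
    replace (S (k - 2) + (n - 1))%nat with (n - 1 + k - 1)%nat in L by lia.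
    eapply Rle_lt_trans; [|apply L]. right. apply E_ext. intros; unfold f; f_equal; lia. }
  assert (ABd : forall n, (1 <= n)%nat -> 0 < A n - B n).
  { intros n Hn. unfold A, B. rewrite <- E_minus. apply (E_pos gA kappa _ _ k); auto.
    intros y. specialize (wb y). specialize (cAB n Hn).
    replace (w y * (v - cA n) - w y * (v - cB n)) with (w y * (cB n - cA n)) by ring.
    apply Rmult_lt_0_compat; lra. }
  assert (exC : ex_series gC) by (exists 1; auto).
  assert (exA : ex_series (fun n => gC n * A n)).
  { apply (ex_series_le (K:=R_AbsRing) (V:=R_CompleteNormedModule) _ (fun n => gC n * v)). intros n. change (Rabs (gC n * A n) <= gC n * v).
    rewrite Rabs_pos_eq. apply Rmult_le_compat_l; auto. apply Ab. apply Rmult_le_pos; auto; apply Ab.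
    apply ex_series_scal_r; auto. }
  assert (exB : ex_series (fun n => gC n * B n)).
  { apply (ex_series_le (K:=R_AbsRing) (V:=R_CompleteNormedModule) _ (fun n => gC n * v)). intros n. change (Rabs (gC n * B n) <= gC n * v).
    rewrite Rabs_pos_eq. apply Rmult_le_compat_l; auto. apply Bb. apply Rmult_le_pos; auto; apply Bb.
    apply ex_series_scal_r; auto. }
  assert (n0ex : exists n0, 0 < gC n0).
  { apply NNPP. intros Hno.
    assert (Z : forall n, gC n = 0).
    { intros n. destruct (HgC_nonneg n); auto. exfalso; apply Hno; exists n; auto. }
    assert (Series gC = 0). { rewrite (Series_fin _ 0). rewrite sum_O; auto. intros; auto. }
    rewrite (is_series_unique _ _ HgC_sum) in H. lra. }
  destruct n0ex as [n0 Hn0].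
  assert (n0pos : (1 <= n0)%nat). { destruct n0; [rewrite HgC0 in Hn0; lra|lia]. }
  set (D := fun n => gC n * A n - gC n * B n).
  assert (Dnn : forall n, 0 <= D n).
  { intros n. unfold D. rewrite <- Rmult_minus_distr_l. destruct n.
    rewrite HgC0; lra. apply Rmult_le_pos; auto. left; apply ABd; lia. }
  assert (Dpos : 0 < D n0).
  { unfold D. rewrite <- Rmult_minus_distr_l. apply Rmult_lt_0_compat; auto. }
  set (a := fun n => if (n =? n0)%nat then D n0 else 0).
  assert (ann : forall n, 0 <= a n <= D n).
  { intros n. unfold a. destruct (n =? n0)%nat eqn:E1.
    - apply Nat.eqb_eq in E1; subst; lra.
    - split; [lra|apply Dnn]. }
  assert (Sa : D n0 <= Series a).
  { rewrite (Series_fin _ n0).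
    - replace (D n0) with (a n0) by (unfold a; rewrite Nat.eqb_refl; auto).
      apply sum_ge_term; auto. intros; apply ann.
    - intros m Hm. unfold a. destruct (m =? n0)%nat eqn:E1; auto. apply Nat.eqb_eq in E1; lia. }
  assert (exD : ex_series D) by (apply (ex_series_minus (K:=R_AbsRing) (V:=R_NormedModule)); auto).
  assert (SD : Series a <= Series D) by (apply Series_le; auto).
  assert (SDe : Series D = Series (fun n => gC n * A n) - Series (fun n => gC n * B n)).
  { apply Series_minus; auto. }
  rewrite Ea, Eb. lra.
Qed.
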